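(* Let $\mathcal{P}\subseteq\mathbb{Z}_{\geq0}$ with $0\in\mathcal{P}$ and $\mathcal{P}-2\neq\emptyset$. Then $e_\mathcal{P}(z)=\sum_{n\in\mathcal{P}}z^n/n!$ satisfies the H-schema.
   Context: $\mathcal{P}-2=\{n-2:n\in\mathcal{P},n\ge2\}$. A function $\epsilon(z)$ analytic at $0$ with radius of convergence $R$ (possibly $\infty$) satisfies the H-schema if: (i) $\epsilon(0)\neq0$ and $\epsilon(z)$ cannot be written as $\epsilon_0+\epsilon_1z$ for any $\epsilon_0,\epsilon_1\in\mathbb{C}$; (ii) all Taylor coefficients $[z^n]\epsilon(z)$ are $\geq0$; (iii) there is a unique $\tau\in\mathbb{R}_{>0}$ with $\tau<R$ and $\epsilon(\tau)-\tau\epsilon'(\tau)=0$. *)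

(* Defs.v *)
From Stdlib Require Import Reals.
From Coquelicot Require Import Coquelicot.
Open Scope R_scope.

Definition H_schema (a : nat -> R) : Prop :=
  let eps := PSeries a in
  let Rad := CV_radius a in
  (* analytic at 0: positive radius of convergence *)
  Rbar_lt 0 Rad /\
  (eps 0 <> 0 /\
   ~ (exists e0 e1 : R, forall z : R, Rbar_lt (Rabs z) Rad -> eps z = e0 + e1 * z)) /\
  (forall n : nat, 0 <= a n) /\
  (exists! tau : R, 0 < tau /\ Rbar_lt tau Rad /\ eps tau - tau * Derive eps tau = 0).

Definition eP_coef (P : nat -> bool) (n : nat) : R :=
  if P n then / INR (Factorial.fact n) else 0.

(* Main.v *)
Require Import Defs.
From Stdlib Require Import Reals Lra Lia Arith.
From Coquelicot Require Import Coquelicot.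
Open Scope R_scope.

Lemma psum_lb (u : nat -> R) (m : nat) :
  (1 <= m)%nat -> (forall n, (1 <= n)%nat -> 0 <= u n) ->
  forall n, u 0%nat + (if le_lt_dec m n then u m else 0) <= sum_f_R0 u n.
Proof.
  intros Hm Hu n. induction n as [|n IH].
  - destruct (le_lt_dec m 0); [lia|]. simpl. lra.
  - simpl. destruct (le_lt_dec m (S n)) as [h|h];
    destruct (le_lt_dec m n) as [h'|h'].
    + specialize (Hu (S n) ltac:(lia)). lra.
    + assert (m = S n) by lia. subst m. lra.
    + lia.
    + specialize (Hu (S n) ltac:(lia)). lra.
Qed.

Lemma series_lb (u : nat -> R) (l : R) (m : nat) :
  is_series u l -> (1 <= m)%nat -> (forall n, (1 <= n)%nat -> 0 <= u n) ->
  u 0%nat + u m <= l.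
Proof.
  intros Hs Hm Hu.
  assert (H := is_lim_seq_le_loc (fun _ => u 0%nat + u m) (sum_n u) (u 0%nat + u m) l).
  simpl in H. apply H.
  - exists m. intros n Hn. rewrite sum_n_Reals.
    pose proof (psum_lb u m Hm Hu n) as K.
    destruct (le_lt_dec m n); [lra|lia].
  - apply is_lim_seq_const.
  - exact Hs.
Qed.

Lemma series_lb0 (u : nat -> R) (l : R) (m : nat) :
  is_series u l -> (forall n, 0 <= u n) -> u m <= l.
Proof.
  intros Hs Hu. destruct m as [|m].
  - pose proof (series_lb u l 1 Hs (le_n 1) (fun n _ => Hu n)). pose proof (Hu 1%nat). lra.
  - pose proof (series_lb u l (S m) Hs ltac:(lia) (fun n _ => Hu n)). pose proof (Hu 0%nat). lra.
Qed.

Lemma pow_lt_m s t m : (1 <= m)%nat -> 0 <= s < t -> s ^ m < t ^ m.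
Proof.
  intros Hm Hst. induction m as [|m IH]; [lia|].
  destruct m as [|m]; [simpl; lra|].
  assert (s ^ S m < t ^ S m) by (apply IH; lia).
  assert (0 <= s ^ S m) by (apply pow_le; lra).
  change (s * s ^ S m < t * t ^ S m). nra.
Qed.

Lemma fact_pos n : 0 < / INR (Factorial.fact n).
Proof. apply Rinv_0_lt_compat, lt_0_INR, Factorial.lt_O_fact. Qed.

Section S.
Variable P : nat -> bool.
Let a := eP_coef P.

Lemma a_nonneg n : 0 <= a n.
Proof. unfold a, eP_coef. destruct (P n); [apply Rlt_le, fact_pos| lra]. Qed.

Lemma a_le n : a n <= / INR (Factorial.fact n).
Proof. unfold a, eP_coef. pose proof (fact_pos n). destruct (P n); lra. Qed.

Lemma Rad : CV_radius a = p_infty.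
Proof.
  destruct (CV_radius_bounded a) as [Hub _].
  assert (HE : forall r, exists M, forall n, Rabs (a n * r ^ n) <= M).
  { intros r. exists (exp (Rabs r)). intros n.
    assert (Hs : is_series (fun k => / INR (Factorial.fact k) * (Rabs r) ^ k) (exp (Rabs r))).
    { apply is_series_Reals. exact (proj2_sig (exist_exp (Rabs r))). }
    pose proof (series_lb0 _ _ n Hs) as K.
    rewrite Rabs_mult, <- RPow_abs, (Rabs_right (a n)) by (apply Rle_ge, a_nonneg).
    apply Rle_trans with (/ INR (Factorial.fact n) * Rabs r ^ n).
    - apply Rmult_le_compat_r; [apply pow_le, Rabs_pos | apply a_le].
    - apply K. intros k. apply Rmult_le_pos; [apply Rlt_le, fact_pos| apply pow_le, Rabs_pos]. }
  destruct (CV_radius a) as [x| |] eqn:E.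
  - exfalso. pose proof (Hub (x+1) (HE (x+1))). simpl in H. lra.
  - reflexivity.
  - exfalso. pose proof (Hub 0 (HE 0)). simpl in H. exact H.
Qed.

Let c := PS_minus (PS_incr_1 (PS_derive a)) a.

Lemma inR x : Rbar_lt (Rabs x) (CV_radius a).
Proof. rewrite Rad. exact I. Qed.

Lemma cval n : c n = (INR n - 1) * a n.
Proof.
  unfold c, PS_minus, PS_incr_1, PS_derive. destruct n; cbn.
  - unfold a. lra.
  - rewrite <- ?S_INR. fold a. ring.
Qed.

Lemma Radc : CV_radius c = p_infty.
Proof.
  pose proof (CV_radius_plus (PS_incr_1 (PS_derive a)) (PS_opp a)) as H.
  rewrite CV_radius_opp, CV_radius_incr_1, CV_radius_derive, Rad in H.
  simpl in H. change (PS_plus (PS_incr_1 (PS_derive a)) (PS_opp a)) with c in H.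
  destruct (CV_radius c); simpl in H; tauto.
Qed.

Lemma inRc x : Rbar_lt (Rabs x) (CV_radius c).
Proof. rewrite Radc. exact I. Qed.

Lemma g_eq t : PSeries c t = t * Derive (PSeries a) t - PSeries a t.
Proof.
  unfold c. rewrite PSeries_minus.
  - rewrite PSeries_incr_1, Derive_PSeries by apply inR. reflexivity.
  - apply CV_radius_inside. rewrite CV_radius_incr_1, CV_radius_derive. apply inR.
  - apply CV_radius_inside, inR.
Qed.

Lemma c_series t : is_series (fun n => c n * t ^ n) (PSeries c t).
Proof.
  apply Series_correct. apply ex_series_Rabs. apply CV_disk_inside, inRc.
Qed.


Lemma c_nonneg n : (1 <= n)%nat -> 0 <= c n.
Proof.
  intros H. rewrite cval. apply Rmult_le_pos; [|apply a_nonneg].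
  apply le_INR in H. simpl in H. lra.
Qed.

Lemma c_pos m : (2 <= m)%nat -> P m = true -> 0 < c m.
Proof.
  intros H Hp. rewrite cval. apply Rmult_lt_0_compat.
  - apply le_INR in H. simpl in H. lra.
  - unfold a, eP_coef. rewrite Hp. apply fact_pos.
Qed.

Lemma c0 : P 0%nat = true -> c 0%nat = -1.
Proof. intros H. rewrite cval. unfold a, eP_coef. rewrite H. simpl. field. Qed.

Lemma g_mono m s t : (2 <= m)%nat -> P m = true -> 0 <= s < t -> PSeries c s < PSeries c t.
Proof.
  intros Hm Hp Hst.
  pose proof (is_series_minus _ _ _ _ (c_series t) (c_series s)) as H.
  apply (is_series_ext _ (fun n => c n * t ^ n - c n * s ^ n)) in H; [|reflexivity].
  apply (series_lb _ _ m) in H; [| lia |].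
  - simpl in H. change (plus (PSeries c t) (opp (PSeries c s))) with (PSeries c t - PSeries c s) in H.
    assert (s ^ m < t ^ m) by (apply pow_lt_m; lia || lra).
    pose proof (c_pos m Hm Hp). nra.
  - intros n Hn. pose proof (c_nonneg n Hn). assert (s ^ n <= t ^ n) by (apply pow_incr; lra). nra.
Qed.

Lemma g_big m T : (2 <= m)%nat -> P m = true -> P 0%nat = true -> 1 <= T -> -1 + c m * T <= PSeries c T.
Proof.
  intros Hm Hp H0 HT.
  pose proof (series_lb _ _ m (c_series T) ltac:(lia)) as H.
  simpl in H. rewrite c0 in H by exact H0.
  assert (T <= T ^ m) by (rewrite <- (pow_1 T) at 1; apply Rle_pow; lia || lra).
  pose proof (c_pos m Hm Hp).
  assert (-1 * 1 + c m * T ^ m <= PSeries c T).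
  { apply H. intros n Hn. apply Rmult_le_pos; [apply c_nonneg; lia | apply pow_le; lra]. }
  nra.
Qed.

End S.

Theorem lemma7p2 (P : nat -> bool) (h0 : P 0%nat = true)
  (h2 : exists n : nat, (2 <= n)%nat /\ P n = true) :
  H_schema (eP_coef P).
Proof.
  destruct h2 as [m [Hm Hp]].
  set (c := PS_minus (PS_incr_1 (PS_derive (eP_coef P))) (eP_coef P)).
  set (G := PSeries c).
  assert (HG0 : G 0 = -1) by (unfold G; rewrite PSeries_0; apply c0; exact h0).
  assert (Hmono : forall s t, 0 <= s < t -> G s < G t) by (intros; apply (g_mono P m); auto).
  assert (Heq : forall t, PSeries (eP_coef P) t - t * Derive (PSeries (eP_coef P)) t = - G t)
    by (intros t; unfold G, c; rewrite g_eq; ring).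
  unfold H_schema. cbv zeta. rewrite Rad.
  split; [exact I|].
  split; [split|split].
  - rewrite PSeries_0. unfold eP_coef. rewrite h0. simpl. lra.
  - intros [e0 [e1 He]].
    assert (HD : forall t, Derive (PSeries (eP_coef P)) t = e1).
    { intros t. rewrite (Derive_ext _ (fun z => e0 + e1 * z)) by (intros; apply He; exact I).
      apply is_derive_unique. auto_derive; auto; ring. }
    assert (HGc : forall t, G t = - e0).
    { intros t. rewrite <- (Ropp_involutive (G t)), <- Heq, HD, He by exact I. ring. }
    pose proof (Hmono 0 1 ltac:(lra)). rewrite !HGc in H. lra.
  - apply a_nonneg.
  - set (T := 1 + 2 / c m).
    assert (Hcm : 0 < c m) by (apply c_pos; auto).
    assert (HT : 1 <= T) by (unfold T; assert (0 < 2 / c m) by (apply Rdiv_lt_0_compat; lra); lra).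
    assert (HGT : 0 < G T).
    { pose proof (g_big P m T Hm Hp h0 HT). fold c in H. fold G in H.
      assert (c m * T = c m + 2) by (unfold T; field; lra). lra. }
    assert (Hcont : continuity G).
    { intros x. apply PSeries_continuity. apply inRc. }
    destruct (IVT G 0 T Hcont ltac:(lra) ltac:(lra) HGT) as [z [Hz Gz]].
    assert (Hzpos : 0 < z) by (destruct (Req_dec z 0); [subst; lra | lra]).
    exists z. split.
    + split; [exact Hzpos|]. split; [exact I|]. rewrite Heq, Gz. ring.
    + intros y [Hy [_ Hy2]]. rewrite Heq in Hy2.
      destruct (Rtotal_order z y) as [h|[h|h]]; [|exact h|].
      * pose proof (Hmono z y ltac:(lra)). lra.
      * pose proof (Hmono y z ltac:(lra)). lra.
Qed.
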